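(* Let $X,Y$ be continuous random variables and $\mathcal{B}$ a natural correlation basis. Then: (i) if $(X,Y)$ is h-symmetric, $\rho^B_{jk}(X,Y)=0$ for $k$ odd; (ii) if $(X,Y)$ is v-symmetric, $\rho^B_{jk}(X,Y)=0$ for $j$ odd; (iii) if $(X,Y)$ is radially symmetric, $\rho^B_{jk}(X,Y)=0$ for $j+k$ odd; (iv) if $(X,Y)$ is jointly symmetric, $\rho^B_{jk}(X,Y)=0$ for $j$ odd or $k$ odd.
   Context: A correlation basis is a complete orthonormal system $\{B_j:j\in\mathbb{N}_0\}$ of $\mathcal{L}^2([0,1])$ with $B_0\equiv1$. It is natural if each $B_j$, $j\ge1$, is continuous on $[0,1]$, continuously differentiable on $(0,1)$ with bounded derivative vanishing exactly at its turning points, piecewise strictly monotonic on a finite partition, and satisfies: $B_j'>0$ on some $(1-\epsilon_j,1)$; $B_j$ has exactly $j-1$ turning points; $B_j(1-u)=(-1)^jB_j(u)$. Basis correlation: $\rho^B_{jk}(X,Y)=\rho(B_j(F_X(X)),B_k(F_Y(Y)))$. A random vector $(X,Y)$ is h-symmetric if $(X,Y-a)\stackrel{d}{=}(X,a-Y)$ for some $a\in\mathbb{R}$; v-symmetric if $(X-b,Y)\stackrel{d}{=}(b-X,Y)$ for some $b\in\mathbb{R}$; radially symmetric if $(X-b,Y-a)\stackrel{d}{=}(b-X,a-Y)$ for some $a,b\in\mathbb{R}$; jointly symmetric if it is both h-symmetric and v-symmetric. *)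

(* Defs.v *)
From HB Require Import structures.
From mathcomp Require Import all_boot all_order all_algebra.
From mathcomp Require Import all_classical all_reals all_analysis.
Set Implicit Arguments. Unset Strict Implicit. Unset Printing Implicit Defensive.
Import Order.TTheory GRing.Theory Num.Theory.
Import numFieldNormedType.Exports.
Local Open Scope classical_set_scope.
Local Open Scope ring_scope.

Section Defs.
Variable R : realType.

Definition I01 : set R := `[0, 1].
Definition I01o : set R := `]0, 1[.

Definition orthonormal_L2 (B : nat -> R -> R) : Prop :=
  (forall j, measurable_fun I01 (B j)) /\
  (forall j, (@lebesgue_measure R).-integrable I01
                (fun x => ((B j x) ^+ 2)%:E)) /\
  (forall j k, (\int[@lebesgue_measure R]_(x in I01) (B j x * B k x)%:E
                = ((j == k)%:R : R)%:E)%E).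

Definition complete_L2 (B : nat -> R -> R) : Prop :=
  forall f : R -> R, measurable_fun I01 f ->
    (@lebesgue_measure R).-integrable I01 (fun x => ((f x) ^+ 2)%:E) ->
    (forall j, (\int[@lebesgue_measure R]_(x in I01) (f x * B j x)%:E
                = (0:R)%:E)%E) ->
    {ae @lebesgue_measure R, forall x, I01 x -> f x = 0}.

Definition correlation_basis (B : nat -> R -> R) : Prop :=
  orthonormal_L2 B /\ complete_L2 B /\ (forall u, I01 u -> B 0%N u = 1).

Definition strictly_incr_on (f : R -> R) (A : set R) : Prop :=
  forall x y, A x -> A y -> x < y -> f x < f y.
Definition strictly_decr_on (f : R -> R) (A : set R) : Prop :=
  forall x y, A x -> A y -> x < y -> f y < f x.

Definition turning_point (f : R -> R) (t : R) : Prop :=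
  I01o t /\
  exists2 d : R, 0 < d &
    (strictly_incr_on f `[t - d, t]%classic /\ strictly_decr_on f `[t, t + d]%classic) \/
    (strictly_decr_on f `[t - d, t]%classic /\ strictly_incr_on f `[t, t + d]%classic).

Definition piecewise_strictly_monotonic (f : R -> R) : Prop :=
  exists (n : nat) (s : nat -> R),
    s 0%N = 0 /\ s n = 1 /\ (forall i, (i < n)%N -> s i < s i.+1) /\
    (forall i, (i < n)%N ->
       strictly_incr_on f `[s i, s i.+1]%classic \/ strictly_decr_on f `[s i, s i.+1]%classic).

Definition natural_basis_function (j : nat) (f : R -> R) : Prop :=
  {within I01, continuous f} /\
  (forall u, I01o u -> derivable f u 1) /\
  {within I01o, continuous (derive1 f)} /\
  (exists M : R, forall u, I01o u -> `|derive1 f u| <= M) /\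
  (forall u, I01o u -> (derive1 f u = 0 <-> turning_point f u)) /\
  piecewise_strictly_monotonic f /\
  (exists2 e : R, 0 < e & forall u, `]1 - e, 1%R[%classic u -> 0 < derive1 f u) /\
  (exists s : seq R, uniq s /\ size s = j.-1 /\
     forall u, turning_point f u <-> u \in s) /\
  (forall u, I01 u -> f (1 - u) = (-1) ^+ j * f u).

Definition natural_correlation_basis (B : nat -> R -> R) : Prop :=
  correlation_basis B /\ (forall j, (0 < j)%N -> natural_basis_function j (B j)).

Context {d : measure_display} {T : measurableType d}.
Variable P : probability T R.

Definition cdf (X : T -> R) (x : R) : R := fine (P [set w | X w <= x]).

Definition continuous_rv (X : T -> R) : Prop :=
  measurable_fun setT X /\ continuous (cdf X).

Definition expect (U : T -> R) : R := fine (\int[P]_w (U w)%:E)%E.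
Definition covariance (U V : T -> R) : R :=
  expect (fun w => U w * V w) - expect U * expect V.
Definition pearson (U V : T -> R) : R :=
  covariance U V / Num.sqrt (covariance U U * covariance V V).

Definition basis_corr (B : nat -> R -> R) (X Y : T -> R) (j k : nat) : R :=
  pearson (fun w => B j (cdf X (X w))) (fun w => B k (cdf Y (Y w))).

Definition eq_dist2 (U V : T -> R * R) : Prop :=
  forall A : set (R * R), measurable A -> P (U @^-1` A) = P (V @^-1` A).

Definition h_symmetric (X Y : T -> R) : Prop :=
  exists a : R, eq_dist2 (fun w => (X w, Y w - a)) (fun w => (X w, a - Y w)).
Definition v_symmetric (X Y : T -> R) : Prop :=
  exists b : R, eq_dist2 (fun w => (X w - b, Y w)) (fun w => (b - X w, Y w)).
Definition radially_symmetric (X Y : T -> R) : Prop :=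
  exists a b : R,
    eq_dist2 (fun w => (X w - b, Y w - a)) (fun w => (b - X w, a - Y w)).
Definition jointly_symmetric (X Y : T -> R) : Prop :=
  h_symmetric X Y /\ v_symmetric X Y.

End Defs.

(* Main.v *)
Require Import Defs.
From HB Require Import structures.
From mathcomp Require Import all_boot all_order all_algebra.
From mathcomp Require Import all_classical all_reals all_analysis.
From mathcomp Require Import measurable_realfun.
From mathcomp Require Import lra.
Import Order.TTheory GRing.Theory Num.Theory.
Import numFieldNormedType.Exports.
Local Open Scope classical_set_scope.
Local Open Scope ring_scope.

Lemma pE {R : realType} {d : measure_display} {T : measurableType d} (P : probability T R)
  {A : set T} : measurable A -> P A = (fine (P A))%:E.
Proof. by move=> mA; rewrite fineK // fin_num_measure. Qed.
Lemma p_ge0 {R : realType} {d : measure_display} {T : measurableType d} (P : probability T R)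
  (A : set T) : 0 <= fine (P A).
Proof. exact/fine_ge0/measure_ge0. Qed.
Lemma p_add {R : realType} {d : measure_display} {T : measurableType d} (P : probability T R)
  (A B : set T) : measurable A -> measurable B -> A `&` B = set0 ->
  fine (P (A `|` B)) = fine (P A) + fine (P B).
Proof.
move=> mA mB AB; rewrite measureU // fineD //; exact: fin_num_measure.
Qed.
Lemma p_le {R : realType} {d : measure_display} {T : measurableType d} (P : probability T R)
  (A B : set T) : measurable A -> measurable B -> A `<=` B ->
  fine (P A) <= fine (P B).
Proof.
move=> mA mB AB; have := le_measure P (mem_set mA) (mem_set mB) AB.
by apply: fine_le => //; exact: fin_num_measure.
Qed.
Lemma p_setT {R : realType} {d : measure_display} {T : measurableType d} (P : probability T R) :
  fine (P setT) = 1.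
Proof. by rewrite probability_setT. Qed.

Lemma mpre {R : realType} {d : measure_display} {T : measurableType d}
  (Y : T -> R) : measurable_fun setT Y -> forall A : set R, measurable A -> measurable (Y @^-1` A).
Proof. by move=> mY A mA; have := mY measurableT A mA; rewrite setTI. Qed.

Lemma m_le {R : realType} {d : measure_display} {T : measurableType d}
  (Y : T -> R) c : measurable_fun setT Y -> measurable [set w | Y w <= c].
Proof.
move=> mY; have -> : [set w | Y w <= c] = Y @^-1` `]-oo, c].
  by apply/seteqP; split => w /=; rewrite in_itv.
exact: mpre.
Qed.
Lemma m_lt {R : realType} {d : measure_display} {T : measurableType d}
  (Y : T -> R) c : measurable_fun setT Y -> measurable [set w | Y w < c].
Proof.
move=> mY; have -> : [set w | Y w < c] = Y @^-1` `]-oo, c[.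
  by apply/seteqP; split => w /=; rewrite in_itv.
exact: mpre.
Qed.
Lemma m_ge {R : realType} {d : measure_display} {T : measurableType d}
  (Y : T -> R) c : measurable_fun setT Y -> measurable [set w | c <= Y w].
Proof.
move=> mY; have -> : [set w | c <= Y w] = Y @^-1` `[c, +oo[.
  by apply/seteqP; split => w /=; rewrite in_itv /= andbT.
exact: mpre.
Qed.
Lemma m_eq {R : realType} {d : measure_display} {T : measurableType d}
  (Y : T -> R) c : measurable_fun setT Y -> measurable [set w | Y w = c].
Proof. by move=> mY; have := mpre Y mY [set c] (measurable_set1 c). Qed.

Lemma atom0 {R : realType} {d : measure_display} {T : measurableType d} (P : probability T R)
  (Y : T -> R) : continuous_rv P Y -> forall t, fine (P [set w | Y w = t]) = 0.
Proof.
move=> [mY cY] t.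
apply/eqP; rewrite eq_le p_ge0 andbT.
apply/ler_addgt0Pr => e e0; rewrite add0r.
have := cvgr_dist_lt _ _ (cY t) _ e0.
move=> Hn; have [δ δ0 Hδ] := iffLR (nbhs_ballP t _) (Hn _).
have δ0p : 0 < δ := δ0.
set s := t - δ / 2.
have /Hδ /= Hs : ball t δ s.
  rewrite /ball /= /s (_ : t - (t - δ / 2) = δ / 2); last by lra.
  rewrite ger0_norm; lra.
have U : [set w | Y w <= t] = [set w | s < Y w <= t] `|` [set w | Y w <= s].
  apply/seteqP; split => w /=.
    by move=> h; case: (leP (Y w) s) => h'; [right|left; apply/andP; split].
  by case=> [/andP[_ ->] //|h]; apply: le_trans h _; rewrite /s; lra.
have mI : measurable [set w | s < Y w <= t].
  have -> : [set w | s < Y w <= t] = Y @^-1` `]s, t].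
    by apply/seteqP; split => w /=; rewrite in_itv.
  exact: mpre.
have D : [set w | s < Y w <= t] `&` [set w | Y w <= s] = set0.
  apply/seteqP; split => w //= [/andP[h1 _] h2].
  by move: (lt_le_trans h1 h2); rewrite ltxx.
have := p_add P _ _ mI (m_le Y s mY) D.
rewrite -U => hU.
apply: le_trans (_ : fine (P [set w | s < Y w <= t]) <= e).
  apply: p_le => //; first exact: m_eq.
  by move=> w /= ->; rewrite lexx andbT /s; lra.
have : fine (P [set w | s < Y w <= t]) = Defs.cdf P Y t - Defs.cdf P Y s by rewrite /Defs.cdf hU; lra.
move=> ->; apply: ltW; apply: le_lt_trans Hs; exact: ler_norm.
Qed.

Lemma cdf_01 {R : realType} {d : measure_display} {T : measurableType d} (P : probability T R)
  (Y : T -> R) x : measurable_fun setT Y -> I01 (Defs.cdf P Y x).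
Proof.
move=> mY; rewrite /I01 /= in_itv /= p_ge0 /=.
have := probability_le1 P (m_le Y x mY).
by rewrite (pE P (m_le Y x mY)) lee_fin.
Qed.

Lemma cdf_refl {R : realType} {d : measure_display} {T : measurableType d} (P : probability T R)
  (Y : T -> R) (a : R) : continuous_rv P Y ->
  (forall c, P [set w | Y w - a <= c] = P [set w | a - Y w <= c]) ->
  forall t, Defs.cdf P Y (a - t + a) = 1 - Defs.cdf P Y t.
Proof.
move=> cY E t; have mY := cY.1.
rewrite /Defs.cdf.
have -> : [set w | Y w <= a - t + a] = [set w | Y w - a <= a - t].
  by apply/seteqP; split => w /=; rewrite lerBlDr.
rewrite E.
have -> : [set w | a - Y w <= a - t] = [set w | t <= Y w].
  by apply/seteqP; split => w /=; rewrite lerD2l lerN2.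
have h1 : fine (P setT) = fine (P [set w | t <= Y w]) + fine (P [set w | Y w < t]).
  rewrite -p_add //; [|exact: m_ge|exact: m_lt|].
    congr (fine (P _)); apply/seteqP; split => w //= _.
    by case: (leP t (Y w)) => h; [left|right].
  apply/seteqP; split => w //= [k1 k2].
  by move: (le_lt_trans k1 k2); rewrite ltxx.
have h2 : fine (P [set w | Y w <= t]) = fine (P [set w | Y w < t]) + fine (P [set w | Y w = t]).
  rewrite -p_add //; [|exact: m_lt|exact: m_eq|].
    congr (fine (P _)); apply/seteqP; split => w /=.
      by rewrite le_eqVlt => /orP[/eqP ->|h]; [right|left].
    by case=> [/ltW|->].
  apply/seteqP; split => w //= [k1 k2].
  by move: k1; rewrite k2 ltxx.
rewrite atom0 // in h2.
move: h1 h2; rewrite p_setT; lra.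
Qed.

Lemma fine_subN (R : realType) (a b : \bar R) : fine (b - a)%E = - fine (a - b)%E.
Proof. by case: a => [a| |]; case: b => [b| |] //=; rewrite ?opprB ?oppr0. Qed.

Lemma expectN {R : realType} {d : measure_display} {T : measurableType d}
  (P : probability T R) (f : T -> R) :
  Defs.expect P (fun w => - f w) = - Defs.expect P f.
Proof.
rewrite /expect integralE [in RHS]integralE.
have -> : (fun x => (- f x)%:E) = (\- (fun x => (f x)%:E))%E.
  by apply/funext => x; rewrite EFinN.
rewrite funeposN funenegN.
exact: fine_subN.
Qed.

Lemma transfer_ge0 {R : realType} {d : measure_display} {T : measurableType d}
  (P : probability T R) (Z1 Z2 : T -> R * R) (h : R * R -> \bar R) :
  measurable_fun setT Z1 -> measurable_fun setT Z2 -> measurable_fun setT h ->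
  (forall y, (0 <= h y)%E) -> eq_dist2 P Z1 Z2 ->
  (\int[P]_x h (Z1 x) = \int[P]_x h (Z2 x))%E.
Proof.
move=> m1 m2 mh h0 E.
have := ge0_integral_pushforward m1 P measurableT mh (fun y _ => h0 y).
rewrite preimage_setT => <-.
have := ge0_integral_pushforward m2 P measurableT mh (fun y _ => h0 y).
rewrite preimage_setT => <-.
apply: eq_measure_integral => A mA _.
rewrite /pushforward /=. exact: E.
Qed.

Lemma transfer {R : realType} {d : measure_display} {T : measurableType d}
  (P : probability T R) (Z1 Z2 : T -> R * R) (g : R * R -> R) :
  measurable_fun setT Z1 -> measurable_fun setT Z2 -> measurable_fun setT g ->
  eq_dist2 P Z1 Z2 ->
  Defs.expect P (fun w => g (Z1 w)) = Defs.expect P (fun w => g (Z2 w)).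
Proof.
move=> m1 m2 mg E.
have mEg : measurable_fun setT (EFin \o g) by apply/measurable_EFinP.
rewrite /Defs.expect integralE [in RHS]integralE.
have -> : ((fun x => (g (Z1 x))%:E)^\+)%E = (fun x => ((EFin \o g)^\+)%E (Z1 x)).
  by apply/funext => x; rewrite !funeposE.
have -> : ((fun x => (g (Z2 x))%:E)^\+)%E = (fun x => ((EFin \o g)^\+)%E (Z2 x)).
  by apply/funext => x; rewrite !funeposE.
have -> : ((fun x => (g (Z1 x))%:E)^\-)%E = (fun x => ((EFin \o g)^\-)%E (Z1 x)).
  by apply/funext => x; rewrite !funenegE.
have -> : ((fun x => (g (Z2 x))%:E)^\-)%E = (fun x => ((EFin \o g)^\-)%E (Z2 x)).
  by apply/funext => x; rewrite !funenegE.
rewrite (transfer_ge0 P Z1 Z2 ((EFin \o g)^\+)%E m1 m2 (measurable_funepos mEg) (fun y => funepos_ge0 _ y) E).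
by rewrite (transfer_ge0 P Z1 Z2 ((EFin \o g)^\-)%E m1 m2 (measurable_funeneg mEg) (fun y => funeneg_ge0 _ y) E).
Qed.

Lemma sym_zero {R : realType} {d : measure_display} {T : measurableType d}
  (P : probability T R) (Z1 Z2 : T -> R * R) (g : R * R -> R) (f : T -> R) :
  measurable_fun setT Z1 -> measurable_fun setT Z2 -> measurable_fun setT g ->
  eq_dist2 P Z1 Z2 -> (forall w, g (Z1 w) = f w) -> (forall w, g (Z2 w) = - f w) ->
  Defs.expect P f = 0.
Proof.
move=> m1 m2 mg E h1 h2.
have := transfer P Z1 Z2 g m1 m2 mg E.
rewrite (_ : (fun w => g (Z1 w)) = f); last exact/funext.
rewrite (_ : (fun w => g (Z2 w)) = (fun w => - f w)); last exact/funext.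
rewrite expectN; lra.
Qed.

Lemma marg2 {R : realType} {d : measure_display} {T : measurableType d}
  (P : probability T R) (p1 q1 p2 q2 : T -> R) :
  eq_dist2 P (fun w => (p1 w, q1 w)) (fun w => (p2 w, q2 w)) ->
  forall c, P [set w | q1 w <= c] = P [set w | q2 w <= c].
Proof.
move=> E c.
have mA : measurable [set p : R * R | p.2 <= c].
  have := @measurable_snd _ _ R R measurableT [set` `]-oo, c]] (measurable_itv _).
  rewrite setTI; congr measurable; apply/seteqP; split => p /=; rewrite in_itv //.
exact: E _ mA.
Qed.

Lemma marg1 {R : realType} {d : measure_display} {T : measurableType d}
  (P : probability T R) (p1 q1 p2 q2 : T -> R) :
  eq_dist2 P (fun w => (p1 w, q1 w)) (fun w => (p2 w, q2 w)) ->
  forall c, P [set w | p1 w <= c] = P [set w | p2 w <= c].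
Proof.
move=> E c.
have mA : measurable [set p : R * R | p.1 <= c].
  have := @measurable_fst _ _ R R measurableT [set` `]-oo, c]] (measurable_itv _).
  rewrite setTI; congr measurable; apply/seteqP; split => p /=; rewrite in_itv //.
exact: E _ mA.
Qed.

Lemma mcomp {R : realType} (f F : R -> R) :
  measurable_fun (@I01 R) f -> measurable_fun setT F -> (forall x, @I01 R (F x)) ->
  measurable_fun setT (f \o F).
Proof.
move=> mf mF HF _ A mA; rewrite setTI.
have -> : (f \o F) @^-1` A = F @^-1` (@I01 R `&` f @^-1` A).
  by apply/seteqP; split => x /=; [move=> h; split|case].
have := mF measurableT _ (mf (measurable_itv _) A mA); rewrite setTI //.
Qed.

Definition phi {R : realType} {d : measure_display} {T : measurableType d}
  (P : probability T R) (X : T -> R) (f : R -> R) (b : R) : R -> R :=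
  fun x => f (Defs.cdf P X (x + b)).

Lemma mphi {R : realType} {d : measure_display} {T : measurableType d}
  (P : probability T R) (X : T -> R) (f : R -> R) (b : R) :
  continuous_rv P X -> measurable_fun (@I01 R) f -> measurable_fun setT (phi P X f b).
Proof.
move=> [mX cX] mf.
apply: (mcomp f (fun x => Defs.cdf P X (x + b))) => //.
- change (measurable_fun setT (Defs.cdf P X \o (fun x => x + b))).
  apply: measurableT_comp; first exact: continuous_measurable_fun.
  by apply: measurable_funD => //; exact: measurable_id.
- by move=> x; exact: cdf_01.
Qed.

Lemma Bsym {R : realType} (B : nat -> R -> R) j :
  natural_correlation_basis B -> (0 < j)%N -> forall u, @I01 R u -> B j (1 - u) = (-1) ^+ j * B j u.
Proof.
move=> [_ HB] j0; have := HB j j0.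
by move=> [_ [_ [_ [_ [_ [_ [_ [_ hs]]]]]]]].
Qed.

Lemma corr0 {R : realType} {d : measure_display} {T : measurableType d}
  (P : probability T R) (B : nat -> R -> R) (X Y : T -> R) j k :
  Defs.expect P (fun w => B j (Defs.cdf P X (X w)) * B k (Defs.cdf P Y (Y w))) = 0 ->
  Defs.expect P (fun w => B j (Defs.cdf P X (X w))) = 0 \/
  Defs.expect P (fun w => B k (Defs.cdf P Y (Y w))) = 0 ->
  basis_corr P B X Y j k = 0.
Proof.
move=> h1 h2; rewrite /basis_corr /pearson /Defs.covariance h1.
by case: h2 => ->; rewrite ?mul0r ?mulr0 subr0 mul0r.
Qed.

Lemma phi_sym {R : realType} {d : measure_display} {T : measurableType d}
  (P : probability T R) (B : nat -> R -> R) (X : T -> R) (b : R) j :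
  natural_correlation_basis B -> (0 < j)%N -> continuous_rv P X ->
  (forall c, P [set w | X w - b <= c] = P [set w | b - X w <= c]) ->
  forall w, phi P X (B j) b (b - X w) = (-1) ^+ j * B j (Defs.cdf P X (X w)).
Proof.
move=> HB j0 cX E w; rewrite /phi cdf_refl // Bsym //; exact: cdf_01 cX.1.
Qed.

Lemma phi_id {R : realType} {d : measure_display} {T : measurableType d}
  (P : probability T R) (f : R -> R) (X : T -> R) (b : R) w :
  phi P X f b (X w - b) = f (Defs.cdf P X (X w)).
Proof. by rewrite /phi subrK. Qed.

Lemma odd_sign {R : realType} (j : nat) (x : R) : odd j -> (-1) ^+ j * x = - x.
Proof. by move=> hj; rewrite -signr_odd hj expr1 mulN1r. Qed.

Lemma mZ {R : realType} {d : measure_display} {T : measurableType d} (X Y : T -> R) :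
  measurable_fun setT X -> measurable_fun setT Y ->
  measurable_fun setT (fun w => (X w, Y w)).
Proof. by move=> mX mY; exact: measurable_fun_pair. Qed.

Lemma mB1 {R : realType} {d : measure_display} {T : measurableType d} (X : T -> R) b :
  measurable_fun setT X -> measurable_fun setT (fun w => X w - b).
Proof. by move=> mX; apply: measurable_funB => //; exact: measurable_cst. Qed.
Lemma mB2 {R : realType} {d : measure_display} {T : measurableType d} (X : T -> R) b :
  measurable_fun setT X -> measurable_fun setT (fun w => b - X w).
Proof. by move=> mX; apply: measurable_funB => //; exact: measurable_cst. Qed.

Lemma mg2 {R : realType} (f g : R -> R) :
  measurable_fun setT f -> measurable_fun setT g ->
  measurable_fun setT (fun p : R * R => f p.1 * g p.2).
Proof.
move=> mf mg; apply: measurable_funM.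
  exact: (measurableT_comp mf measurable_fst).
exact: (measurableT_comp mg measurable_snd).
Qed.
Lemma mg1 {R : realType} (f : R -> R) :
  measurable_fun setT f -> measurable_fun setT (fun p : R * R => f p.1).
Proof. by move=> mf; exact: (measurableT_comp mf measurable_fst). Qed.
Lemma mg1' {R : realType} (f : R -> R) :
  measurable_fun setT f -> measurable_fun setT (fun p : R * R => f p.2).
Proof. by move=> mf; exact: (measurableT_comp mf measurable_snd). Qed.

Theorem proposition4 (R : realType) (d : measure_display) (T : measurableType d)
  (P : probability T R) (X Y : T -> R) (B : nat -> R -> R) :
  continuous_rv P X -> continuous_rv P Y -> natural_correlation_basis B ->
  [/\ (h_symmetric P X Y ->
         forall j k : nat, (0 < j)%N -> odd k -> basis_corr P B X Y j k = 0),
      (v_symmetric P X Y ->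
         forall j k : nat, (0 < k)%N -> odd j -> basis_corr P B X Y j k = 0),
      (radially_symmetric P X Y ->
         forall j k : nat, (0 < j)%N -> (0 < k)%N -> odd (j + k) ->
           basis_corr P B X Y j k = 0) &
      (jointly_symmetric P X Y ->
         forall j k : nat, (0 < j)%N -> (0 < k)%N -> odd j || odd k ->
           basis_corr P B X Y j k = 0)].
Proof.
move=> cX cY HB.
have mB : forall j, measurable_fun (@I01 R) (B j) := HB.1.1.1.
have mX := cX.1; have mY := cY.1.
have hi : h_symmetric P X Y ->
         forall j k : nat, (0 < j)%N -> odd k -> basis_corr P B X Y j k = 0.
  move=> [a E] j k j0 hk.
  have k0 : (0 < k)%N by case: k hk.
  have EY := marg2 P _ _ _ _ E.
  have m1 := mZ _ _ mX (mB1 _ a mY); have m2 := mZ _ _ mX (mB2 _ a mY).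
  apply: corr0.
    apply: (sym_zero P _ _ (fun p => phi P X (B j) 0 p.1 * phi P Y (B k) a p.2) _ m1 m2) => //.
    - by apply: mg2; apply: mphi.
    - by move=> w /=; rewrite phi_id /phi addr0.
    - by move=> w /=; rewrite phi_sym // odd_sign // /phi addr0 mulrN.
  right.
  apply: (sym_zero P _ _ (fun p => phi P Y (B k) a p.2) _ m1 m2) => //.
  - by apply: mg1'; apply: mphi.
  - by move=> w /=; rewrite phi_id.
  - by move=> w /=; rewrite phi_sym // odd_sign.
have hii : v_symmetric P X Y ->
         forall j k : nat, (0 < k)%N -> odd j -> basis_corr P B X Y j k = 0.
  move=> [b E] j k k0 hj.
  have j0 : (0 < j)%N by case: j hj.
  have EX := marg1 P _ _ _ _ E.
  have m1 := mZ _ _ (mB1 _ b mX) mY; have m2 := mZ _ _ (mB2 _ b mX) mY.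
  apply: corr0.
    apply: (sym_zero P _ _ (fun p => phi P X (B j) b p.1 * phi P Y (B k) 0 p.2) _ m1 m2) => //.
    - by apply: mg2; apply: mphi.
    - by move=> w /=; rewrite phi_id /phi addr0.
    - by move=> w /=; rewrite phi_sym // odd_sign // /phi addr0 mulNr.
  left.
  apply: (sym_zero P _ _ (fun p => phi P X (B j) b p.1) _ m1 m2) => //.
  - by apply: mg1; apply: mphi.
  - by move=> w /=; rewrite phi_id.
  - by move=> w /=; rewrite phi_sym // odd_sign.
split => //.
- move=> [a [b E]] j k j0 k0 hjk.
  have EX := marg1 P _ _ _ _ E; have EY := marg2 P _ _ _ _ E.
  have m1 := mZ _ _ (mB1 _ b mX) (mB1 _ a mY); have m2 := mZ _ _ (mB2 _ b mX) (mB2 _ a mY).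
  apply: corr0.
    apply: (sym_zero P _ _ (fun p => phi P X (B j) b p.1 * phi P Y (B k) a p.2) _ m1 m2) => //.
    - by apply: mg2; apply: mphi.
    - by move=> w /=; rewrite !phi_id.
    - move=> w /=; rewrite !phi_sym // mulrACA -exprD odd_sign //.
  case hj: (odd j).
    left.
    apply: (sym_zero P _ _ (fun p => phi P X (B j) b p.1) _ m1 m2) => //.
    - by apply: mg1; apply: mphi.
    - by move=> w /=; rewrite phi_id.
    - by move=> w /=; rewrite phi_sym // odd_sign.
  right.
  have hk : odd k by move: hjk; rewrite oddD hj.
  apply: (sym_zero P _ _ (fun p => phi P Y (B k) a p.2) _ m1 m2) => //.
  - by apply: mg1'; apply: mphi.
  - by move=> w /=; rewrite phi_id.
  - by move=> w /=; rewrite phi_sym // odd_sign.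
- move=> [hh hv] j k j0 k0 /orP[hj|hk].
    exact: hii.
  exact: hi.
Qed.
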